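(* In the $\ell^1$ linear social choice setting, the pure stable lottery rule $f_{\mathrm{PSLR}}$ has worst-case distortion $\mathrm{D}(f_{\mathrm{PSLR}})=O(d)$.
   Context: Setting ($\ell^1$ linear social choice). Fix a dimension $d\ge 1$ and let $\Delta_d=\{x\in\mathbb{R}^d_{\ge 0}:\sum_i x^i=1\}$. An instance consists of a finite set $V$ of $n$ voters and a finite set $C$ of $m$ candidates, each a vector in $\Delta_d$, with every voter vector in $\mathrm{Cone}(C)$ (nonnegative linear combinations of candidate vectors). Utility: $u_v(c)=v^\top c$. Each voter reports a ranking of $C$ consistent with its utilities (ties broken arbitrarily); $\sigma$ is the profile. $\mathrm{UW}(c)=\sum_{v\in V}u_v(c)$. A randomized voting rule outputs a distribution over $C$ based only on the profile (neither voter nor candidate vectors are seen). Distortion on an instance: $\max_c\mathrm{UW}(c)/\mathbb{E}_{c\sim f}[\mathrm{UW}(c)]$; $\mathrm{D}(f)$ is the supremum over all instances, as a function of $d$. Stable lottery: for a committee $W\subseteq C$ and $c\in C$, $S_c(W)$ is the set of voters ranking $c$ above every member of $W$; a distribution $\mathcal W$ over committees of size $k$ is a stable lottery if $\mathbb{E}_{W\sim\mathcal W}[|S_c(W)|]\le n/k$ for all $c\in C$ (such lotteries exist for every profile). Pure stable lottery rule $f_{\mathrm{PSLR}}$: given a stable lottery $\mathcal W$ over committees of size $2d$, choose each $c\in C$ with probability $\frac{1}{2d}\Pr_{W\sim\mathcal W}[c\in W]$. *)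

(* Defs.v *)
From mathcomp Require Import all_boot all_order all_algebra.
From mathcomp Require Import all_fingroup.
From mathcomp Require Import reals.
Set Implicit Arguments. Unset Strict Implicit. Unset Printing Implicit Defensive.
Import Order.TTheory GRing.Theory Num.Theory.
Local Open Scope ring_scope.

Section L1SocialChoice.
Variables (R : realType) (d n m : nat).

Notation vec := {ffun 'I_d -> R}.

Definition in_simplex (x : vec) : Prop :=
  (forall i, 0 <= x i) /\ \sum_(i < d) x i = 1.

Definition in_cone (cand : 'I_m -> vec) (v : vec) : Prop :=
  exists lam : 'I_m -> R, (forall c, 0 <= lam c) /\
    forall i, v i = \sum_(c < m) lam c * cand c i.

Definition util (v c : vec) : R := \sum_(i < d) v i * c i.

Definition UW (vot : 'I_n -> vec) (cand : 'I_m -> vec) (c : 'I_m) : R :=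
  \sum_(v < n) util (vot v) (cand c).

(* A profile: voter v's ranking is the bijection sigma v : C -> positions,
   position 0 = top; (sigma v c < sigma v c') means v ranks c above c'. *)
Definition consistent (vot : 'I_n -> vec) (cand : 'I_m -> vec)
    (sigma : 'I_n -> {perm 'I_m}) : Prop :=
  forall v c c', (sigma v c < sigma v c')%N ->
    util (vot v) (cand c') <= util (vot v) (cand c).

Definition Sc (sigma : 'I_n -> {perm 'I_m}) (W : {set 'I_m}) (c : 'I_m)
    : {set 'I_n} :=
  [set v | [forall w in W, (sigma v c < sigma v w)%N]].

Definition stable_lottery (sigma : 'I_n -> {perm 'I_m}) (k : nat)
    (p : {ffun {set 'I_m} -> R}) : Prop :=
  [/\ forall W, 0 <= p W,
      \sum_(W : {set 'I_m}) p W = 1,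
      forall W, p W != 0 -> #|W| = k &
      forall c, \sum_(W : {set 'I_m}) p W * (#|Sc sigma W c|)%:R
                  <= n%:R / k%:R ].

Definition pslr (p : {ffun {set 'I_m} -> R}) (c : 'I_m) : R :=
  ((2 * d)%N%:R)^-1 * \sum_(W : {set 'I_m} | c \in W) p W.

Definition expected_UW (vot : 'I_n -> vec) (cand : 'I_m -> vec)
    (p : {ffun {set 'I_m} -> R}) : R :=
  \sum_(c < m) pslr p c * UW vot cand c.

End L1SocialChoice.

(* Main.v *)
Require Import Defs.
From mathcomp Require Import all_boot all_order all_algebra all_fingroup reals.
From mathcomp Require Import ring lra.
Import Order.TTheory GRing.Theory Num.Theory.
Local Open Scope ring_scope.

Lemma arith (R : realType) (x y E U z : R) : 1 <= y -> 0 <= x -> 0 <= E ->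
  2 * y * z = x -> U <= 2 * y * E + z -> x * x <= y * (x * (2 * y * E + z)) ->
  U <= 4 * y * E.
Proof.
move=> hy hx hE hz hU hc.
have hz0 : 0 <= z by nra.
subst x.
have h2 : (2 * y * y) * (z * z) <= (2 * y * y) * (2 * y * z * E) by nra.
have h3 : z * z <= 2 * y * z * E.
  by rewrite -(ler_pM2l (_ : 0 < 2 * y * y)) //; nra.
have : z <= 2 * y * E.
  move: hz0; rewrite le_eqVlt => /orP [/eqP <-|hzz]; first nra.
  rewrite -(ler_pM2l hzz).
  by apply: le_trans h3 _; rewrite le_eqVlt; apply/orP; left; apply/eqP; ring.
nra.
Qed.

Section Pf.
Variables (R : realType) (d n m : nat).
Variables (vot : 'I_n -> {ffun 'I_d -> R}) (cand : 'I_m -> {ffun 'I_d -> R})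
  (sigma : 'I_n -> {perm 'I_m}) (p : {ffun {set 'I_m} -> R}).
Hypotheses (Hc : forall c, in_simplex (cand c)) (Hv : forall v, in_simplex (vot v))
  (Hcons : consistent vot cand sigma).

Lemma util_ge0 v c : 0 <= util (vot v) (cand c).
Proof.
rewrite /util; apply: sumr_ge0 => i _; apply: mulr_ge0.
  by case: (Hv v). by case: (Hc c).
Qed.

Lemma coord_le1 c i : cand c i <= 1.
Proof.
case: (Hc c) => H0 <-.
rewrite (bigD1 i) //= lerDl; apply: sumr_ge0 => j _; exact: H0.
Qed.

Lemma util_le1 v c : util (vot v) (cand c) <= 1.
Proof.
rewrite /util; case: (Hv v) => H0 H1.
rewrite -[X in _ <= X]H1; apply: ler_sum => i _.
by rewrite -{2}(mulr1 (vot v i)) ler_wpM2l // coord_le1.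
Qed.

Lemma UW_ge0 c : 0 <= UW vot cand c.
Proof. by apply: sumr_ge0 => v _; apply: util_ge0. Qed.

Lemma step_voter (W : {set 'I_m}) c0 v :
  util (vot v) (cand c0) <=
  \sum_(w in W) util (vot v) (cand w) + (v \in Sc sigma W c0)%:R.
Proof.
have Hs : 0 <= \sum_(w in W) util (vot v) (cand w).
  by apply: sumr_ge0 => w _; apply: util_ge0.
case: (boolP (v \in Sc sigma W c0)) => HS.
  by rewrite /= -[util _ _]add0r lerD // util_le1.
rewrite addr0.
have [w wW Hw] : exists2 w, w \in W & ~~ (sigma v c0 < sigma v w)%N.
  move: HS; rewrite inE => /forallPn [w]; rewrite negb_imply => /andP [wW Hw].
  by exists w.
have Hle : util (vot v) (cand c0) <= util (vot v) (cand w).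
  rewrite -leqNgt leq_eqVlt in Hw; case/orP: Hw => Hw.
    have -> : w = c0 by apply: (perm_inj (s := sigma v)); apply: val_inj; exact/eqP.
    by [].
  exact: Hcons.
apply: (le_trans Hle).
rewrite (bigD1 w) //= lerDl; apply: sumr_ge0 => j _; exact: util_ge0.
Qed.

Lemma step_W (W : {set 'I_m}) c0 :
  UW vot cand c0 <= \sum_(w in W) UW vot cand w + (#|Sc sigma W c0|)%:R.
Proof.
rewrite /UW [X in _ <= X + _]exchange_big /= -sum1_card natr_sum [X in _ + X]big_mkcond /= -big_split /=.
apply: ler_sum => v _; apply: le_trans (step_voter W c0 v) _.
by rewrite lerD // ; case: (v \in _).
Qed.


Lemma exch (Hd : (0 < d)%N) :
  \sum_(W : {set 'I_m}) p W * \sum_(w in W) UW vot cand w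
  = ((2 * d)%N)%:R * expected_UW vot cand p.
Proof.
have hk : ((2 * d)%N)%:R != 0 :> R by rewrite pnatr_eq0 muln_eq0 negb_or /= -lt0n.
rewrite /expected_UW /pslr [RHS]mulr_sumr.
under [RHS]eq_bigr => c _ do rewrite mulrA mulrA mulfV // mul1r mulr_suml.
transitivity (\sum_(W : {set 'I_m}) \sum_c (if c \in W then p W * UW vot cand c else 0)).
  apply: eq_bigr => W _; rewrite mulr_sumr big_mkcond /=.
  by apply: eq_bigr => c _; case: (c \in W).
rewrite exchange_big /=; apply: eq_bigr => c _; rewrite [RHS]big_mkcond /=.
apply: eq_bigr => W _.
by case: (c \in W).
Qed.

Lemma bound (Hd : (0 < d)%N) (Hp : stable_lottery sigma (2 * d) p) c0 :
  UW vot cand c0 <= ((2 * d)%N)%:R * expected_UW vot cand p + n%:R / ((2 * d)%N)%:R.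
Proof.
case: Hp => Hp0 Hp1 _ HS.
rewrite -exch //.
have -> : UW vot cand c0 = \sum_(W : {set 'I_m}) p W * UW vot cand c0.
  by rewrite -mulr_suml Hp1 mul1r.
apply: le_trans (_ : \sum_(W : {set 'I_m}) p W *
   (\sum_(w in W) UW vot cand w + (#|Sc sigma W c0|)%:R) <= _).
  by apply: ler_sum => W _; apply: ler_wpM2l => //; apply: step_W.
under eq_bigr => W _ do rewrite mulrDr.
by rewrite big_split /= lerD // HS.
Qed.

Lemma cone_bound (Hd : (0 < d)%N) (Hcone : forall v, in_cone cand (vot v))
  B (HB : forall c, UW vot cand c <= B) :
  n%:R * n%:R <= d%:R * (n%:R * B).
Proof.
pose V i := \sum_(v < n) vot v i.
have HVd i : V i = \sum_(v < n) vot v i by [].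
have HV1 : \sum_(i < d) V i = n%:R.
  rewrite /V exchange_big /=.
  under eq_bigr => v _ do rewrite (proj2 (Hv v)).
  by rewrite sumr_const card_ord.
have HUW c : UW vot cand c = \sum_(i < d) V i * cand c i.
  rewrite /UW /util exchange_big; apply: eq_bigr => i _.
  by rewrite /V mulr_suml.
have Hvb v : \sum_(i < d) V i * vot v i <= B.
  case: (Hcone v) => lam [hl0 hl].
  have hsum : \sum_(c < m) lam c = 1.
    case: (Hv v) => _ <-.
    under [RHS]eq_bigr => i _ do rewrite hl.
    rewrite exchange_big; apply: eq_bigr => c _.
    by rewrite -mulr_sumr (proj2 (Hc c)) mulr1.
  under eq_bigr => i _ do rewrite hl mulr_sumr.
  rewrite exchange_big /=.
  apply: le_trans (_ : \sum_(c < m) lam c * B <= _).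
    apply: ler_sum => c _.
    rewrite (_ : \sum_(i < d) V i * (lam c * cand c i) = lam c * UW vot cand c).
      by apply: ler_wpM2l.
    by rewrite HUW mulr_sumr; apply: eq_bigr => i _; rewrite mulrCA.
  by rewrite -mulr_suml hsum mul1r.
have H2 : \sum_(i < d) V i ^+ 2 <= n%:R * B.
  have -> : \sum_(i < d) V i ^+ 2 = \sum_(v < n) \sum_(i < d) V i * vot v i.
    rewrite exchange_big /=; apply: eq_bigr => i _.
    by rewrite expr2 {2}HVd mulr_sumr.
  apply: le_trans (_ : \sum_(v < n) B <= _); first by apply: ler_sum.
  by rewrite sumr_const card_ord mulr_natl.
have H3 : \sum_(i < d) (d%:R * V i - n%:R) ^+ 2 =
   d%:R ^+ 2 * \sum_(i < d) V i ^+ 2 - 2 * d%:R * n%:R * \sum_(i < d) V i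
   + d%:R * n%:R ^+ 2.
  rewrite (eq_bigr (fun i => d%:R ^+ 2 * V i ^+ 2 - 2 * d%:R * n%:R * V i
        + n%:R ^+ 2)); last by move=> i _; ring.
  rewrite big_split sumrB /= -!mulr_sumr sumr_const card_ord.
  by rewrite -[n%:R *+ d]mulr_natl; ring.
have H4 : 0 <= \sum_(i < d) (d%:R * V i - n%:R) ^+ 2 :> R.
  by apply: sumr_ge0 => i _; apply: sqr_ge0.
rewrite H3 HV1 in H4.
have hd1 : 1 <= d%:R :> R by rewrite ler1n.
set S2 := \sum_(i < d) V i ^+ 2 in H2 H4.
have H5 : n%:R ^+ 2 <= d%:R * S2 :> R.
  rewrite -(ler_pM2l (_ : 0 < d%:R :> R)); last by lra.
  nra.
nra.
Qed.
End Pf.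

Theorem theorem9 :
  exists K : nat,
  forall (R : realType) (d n m : nat)
         (vot : 'I_n -> {ffun 'I_d -> R}) (cand : 'I_m -> {ffun 'I_d -> R})
         (sigma : 'I_n -> {perm 'I_m}) (p : {ffun {set 'I_m} -> R}),
    (0 < d)%N ->
    injective cand ->
    (forall c, in_simplex (cand c)) ->
    (forall v, in_simplex (vot v)) ->
    (forall v, in_cone cand (vot v)) ->
    consistent vot cand sigma ->
    stable_lottery sigma (2 * d) p ->
    forall c : 'I_m,
      UW vot cand c <= (K * d)%N%:R * expected_UW vot cand p.
Proof.
exists 4%N => R d n m vot cand sigma p Hd _ Hc Hv Hcone Hcons Hp c.
have HB : forall c0, UW vot cand c0 <=
    ((2 * d)%N)%:R * expected_UW vot cand p + n%:R / ((2 * d)%N)%:R.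
  exact: (@bound R d n m vot cand sigma p Hc Hv Hcons Hd Hp).
have HE : 0 <= expected_UW vot cand p.
  case: Hp => Hp0 _ _ _.
  apply: sumr_ge0 => c0 _; apply: mulr_ge0; last first.
    by apply: UW_ge0.
  apply: mulr_ge0; first by rewrite invr_ge0.
  by apply: sumr_ge0.
have HC := @cone_bound R d n m vot cand Hc Hv Hd Hcone _ HB.
have hd1 : 1 <= d%:R :> R by rewrite ler1n.
have hd0 : d%:R != 0 :> R by rewrite pnatr_eq0 -lt0n.
move: (HB c) HC; rewrite !natrM.
move: (UW vot cand c) (expected_UW vot cand p) HE => U E HE hU hC.
apply: (@arith R n%:R d%:R E U (n%:R / (2%:R * d%:R))) => //.
  by field.
Qed.
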